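(* The path functor $P:\mathsf{RSRel}\to\mathsf{Met}$ is a morphism of weakly closed monoidal refinements of $\mathsf{Set}$ from $(\mathsf{RSRel},1,\times,M,q)$ to $(\mathsf{Met},1,\times,\infty\cdot-,p)$; that is: (1) $P$ is strict symmetric monoidal from $(\mathsf{RSRel},1,\times)$ to $(\mathsf{Met},1,\times)$; (2) $(\mathrm{Id}_{\mathsf{Set}},P)$ is a map of adjunctions from $M\dashv q$ to $\infty\cdot-\dashv p$ (in particular $P\circ M=\infty\cdot-$ and $p\circ P=q$); and (3) for every set $X$, $(P,P)$ is a map of adjunctions from $(-\times MX\dashv MX\Rightarrow -)$ on $\mathsf{RSRel}$ to $(-\times(\infty\cdot X)\dashv(\infty\cdot X)\multimap -)$ on $\mathsf{Met}$.
   Context: $\mathsf{RSRel}$: objects are sets with a reflexive symmetric relation, morphisms relation-preserving functions; $1$ is the one-point set with the full relation; $X\times Y$ is $|X|\times|Y|$ with $(x,y)\sim(x',y')$ iff $x\sim x'$ and $y\sim y'$; $X\Rightarrow Y$ is the set of all functions $|X|\to|Y|$ with $f\sim f'$ iff $x\sim x'$ implies $f(x)\sim f'(x')$. $q:\mathsf{RSRel}\to\mathsf{Set}$ is the forgetful functor and $M:\mathsf{Set}\to\mathsf{RSRel}$ equips a set with the equality relation ($M\dashv q$ with identity unit). $\mathsf{Met}$: extended pseudo-metric spaces ($d:|X|^2\to[0,\infty]$, $d(x,x)=0$, symmetric, triangle inequality) and non-expansive maps; $1$ is the one-point space; $X\times Y$ is $|X|\times|Y|$ with $d=\max(d_X,d_Y)$;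 for a set $X$, $\infty\cdot X$ has $d(x,x')=\infty$ for $x\neq x'$; $A\multimap B$ is the set of non-expansive maps with metric $\sup_x d_B(a(x),b(x))$; $p:\mathsf{Met}\to\mathsf{Set}$ is the forgetful functor ($\infty\cdot-\dashv p$ with identity unit). Both $(\mathsf{RSRel},1,\times,M,q)$ and $(\mathsf{Met},1,\times,\infty\cdot-,p)$ are weakly closed monoidal refinements of $\mathsf{Set}$ (a symmetric monoidal category with an adjunction $L\dashv p$ to $\mathsf{Set}$ where $p$ is strict monoidal and faithful, the unit is the identity, each $-\otimes LX$ has a right adjoint, and $(p,p)$ is a map of adjunctions to $(-\times X\dashv X\Rightarrow-)$ in $\mathsf{Set}$). A map of adjunctions $(F,G)$ from $\langle L,R,\eta\rangle:\mathbb{C}\rightharpoonup\mathbb{D}$ to $\langle L',R',\eta'\rangle:\mathbb{C}'\rightharpoonup\mathbb{D}'$ is a pair of functors with $G\circ L=L'\circ F$, $F\circ R=R'\circ G$, $F\eta=\eta'F$. $P$ sends $X\in\mathsf{RSRel}$ to $|X|$ with the path metric ($d(x,x')$ = least $k$ with a chain $x=x_0\sim x_1\sim\dots\sim x_k=x'$, or $\infty$ if none) and is the identity on morphisms. *)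

(* Defs.v *)
From HB Require Import structures.
From mathcomp Require Import all_boot all_order all_algebra.
From mathcomp Require Import all_classical all_reals ereal.
Set Implicit Arguments. Unset Strict Implicit. Unset Printing Implicit Defensive.
Import Order.TTheory GRing.Theory Num.Theory.
Local Open Scope classical_set_scope.
Local Open Scope ereal_scope.

Record rsrel := RSRel {
  rs_car :> Type;
  rs_rel : rs_car -> rs_car -> Prop;
  rs_refl : forall x, rs_rel x x;
  rs_sym : forall x y, rs_rel x y -> rs_rel y x }.
Arguments rs_rel : clear implicits.

Definition rs_hom (X Y : rsrel) (f : rs_car X -> rs_car Y) : Prop :=
  forall x x', rs_rel X x x' -> rs_rel Y (f x) (f x').

Definition rs_one : rsrel :=
  @RSRel unit (fun _ _ => True) (fun _ => I) (fun _ _ _ => I).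

Definition rs_prod (X Y : rsrel) : rsrel.
Proof.
refine (@RSRel (rs_car X * rs_car Y)%type
  (fun p q => rs_rel X p.1 q.1 /\ rs_rel Y p.2 q.2) _ _).
- by move=> p; split; apply: rs_refl.
- by move=> p q [h1 h2]; split; apply: rs_sym.
Defined.

Definition rs_M (X : Type) : rsrel :=
  @RSRel X (fun x y => x = y) (fun x => erefl x) (fun x y h => esym h).

Definition rs_expM (X : Type) (Y : rsrel) : rsrel.
Proof.
refine (@RSRel (X -> rs_car Y)
  (fun f g => forall x x', rs_rel (rs_M X) x x' -> rs_rel Y (f x) (g x')) _ _).
- by move=> f x x' /= ->; apply: rs_refl.
- by move=> f g h x x' /= e; apply: rs_sym; apply: h.
Defined.

Definition rs_chain (X : rsrel) (k : nat) (x y : rs_car X) : Prop :=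
  exists c : nat -> rs_car X,
    [/\ c 0%N = x, c k = y & forall i, (i < k)%N -> rs_rel X (c i) (c i.+1)].

Section Met.
Variable R : realType.

(* a carrier with a [0,oo]-valued distance; the metric axioms are the predicate is_met *)
Record pmet := PMet { pm_car :> Type; pm_d : pm_car -> pm_car -> \bar R }.
Arguments pm_d : clear implicits.

Definition is_met (A : pmet) : Prop :=
  [/\ forall x y, 0 <= pm_d A x y,
      forall x, pm_d A x x = 0,
      forall x y, pm_d A x y = pm_d A y x &
      forall x y z, pm_d A x z <= pm_d A x y + pm_d A y z].

Definition nonexpansive (A B : pmet) (f : pm_car A -> pm_car B) : Prop :=
  forall x y, pm_d B (f x) (f y) <= pm_d A x y.

Definition met_one : pmet := @PMet unit (fun _ _ => 0).

Definition met_prod (A B : pmet) : pmet :=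
  @PMet (pm_car A * pm_car B)%type
    (fun p q => Order.max (pm_d A p.1 q.1) (pm_d B p.2 q.2)).

Definition met_inf (X : Type) : pmet :=
  @PMet X (fun x y => if `[< x = y >] then 0 else +oo).

(* A -o B : non-expansive maps with the sup metric (sup taken in [0,oo]) *)
Definition met_lolli (A B : pmet) : pmet :=
  @PMet {h : pm_car A -> pm_car B | nonexpansive h}
    (fun f g => ereal_sup ([set 0] `|`
        [set pm_d B (proj1_sig f x) (proj1_sig g x) | x in [set: pm_car A]])).

(* the path functor on objects: least length of a chain, or +oo if none *)
Definition path_d (X : rsrel) (x y : rs_car X) : \bar R :=
  ereal_inf [set (k%:R)%:E | k in [set k | rs_chain k x y]].

Definition P (X : rsrel) : pmet := @PMet (rs_car X) (@path_d X).

End Met.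
Arguments pm_d {R} _ _ _.

(* Main.v *)
Require Import Defs.
From HB Require Import structures.
From mathcomp Require Import all_boot all_order all_algebra.
From mathcomp Require Import all_classical all_reals ereal.
From mathcomp Require Import zify.
Set Implicit Arguments. Unset Strict Implicit.
Import Order.TTheory GRing.Theory Num.Theory.
Local Open Scope classical_set_scope.
Local Open Scope ereal_scope.

Section Aux.
Variable R : realType.

Lemma chain_refl (X : rsrel) (x : X) : rs_chain 0 x x.
Proof. by exists (fun _ => x); split => // i. Qed.

Lemma chain0 (X : rsrel) (x y : X) : rs_chain 0 x y -> x = y.
Proof. by case=> c [<- <- _]. Qed.

Lemma chain_pad (X : rsrel) (x y : X) k n :
  rs_chain k x y -> (k <= n)%N -> rs_chain n x y.
Proof.
case=> c [c0 ck cr] kn.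
exists (fun i => if (i <= k)%N then c i else y); split.
- by rewrite leq0n.
- case: (leqP n k) => [nk|//].
  by have -> : n = k by apply/eqP; rewrite eqn_leq nk kn.
- move=> i ilt; case: (leqP i.+1 k) => [ik|ik].
  + by rewrite (ltnW ik); apply: cr.
  + case: (leqP i k) => [ik'|_]; last by apply: rs_refl.
    have -> : i = k by lia.
    by rewrite ck; apply: rs_refl.
Qed.

Lemma chain_sym (X : rsrel) (x y : X) k : rs_chain k x y -> rs_chain k y x.
Proof.
case=> c [c0 ck cr]; exists (fun i => c (k - i)%N); split.
- by rewrite subn0.
- by rewrite subnn.
- move=> i ik; apply: rs_sym.
  have -> : (k - i = (k - i.+1).+1)%N by lia.
  by apply: cr; lia.
Qed.

Lemma chain_cat (X : rsrel) (x y z : X) m n :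
  rs_chain m x y -> rs_chain n y z -> rs_chain (m + n) x z.
Proof.
case=> c [c0 cm cr] [d [d0 dn dr]].
exists (fun i => if (i <= m)%N then c i else d (i - m)%N); split.
- by rewrite leq0n.
- case: (leqP (m + n) m) => [h|h]; last by rewrite addnC addnK.
  have n0 : n = 0%N by lia.
  by subst n; rewrite addn0 cm -d0.
- move=> i ilt; case: (leqP i.+1 m) => [ik|ik].
  + by rewrite (ltnW ik); apply: cr.
  + case: (leqP i m) => [ik'|ik'].
    * have ei : i = m by lia.
      subst i; rewrite cm subSnn -d0; apply: dr; lia.
    * have -> : (i.+1 - m = (i - m).+1)%N by lia.
      apply: dr; lia.
Qed.

Lemma chain_map (X Y : rsrel) (f : X -> Y) (x y : X) k :
  rs_hom f -> rs_chain k x y -> rs_chain k (f x) (f y).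
Proof.
move=> hf [c [c0 ck cr]]; exists (fun i => f (c i)); split; try by congr f.
by move=> i ik; apply: hf; apply: cr.
Qed.

Lemma chain_prod (X Y : rsrel) (p q : rs_prod X Y) k :
  rs_chain k p q <-> (rs_chain k p.1 q.1 /\ rs_chain k p.2 q.2).
Proof.
split.
- case=> c [c0 ck cr]; split.
  + exists (fun i => (c i).1); split; [by rewrite c0|by rewrite ck|].
    by move=> i ik; case: (cr i ik).
  + exists (fun i => (c i).2); split; [by rewrite c0|by rewrite ck|].
    by move=> i ik; case: (cr i ik).
- case=> -[c [c0 ck cr]] [d [d0 dk dr]].
  exists (fun i => (c i, d i)); split.
  + by rewrite c0 d0 -surjective_pairing.
  + by rewrite ck dk -surjective_pairing.
  + by move=> i ik; split; [apply: cr|apply: dr].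
Qed.

Lemma chain_M (X : Type) (x y : rs_M X) k : rs_chain k x y -> x = y.
Proof.
case=> c [c0 ck cr].
suff h : forall i, (i <= k)%N -> c i = x by rewrite -ck h.
elim=> [//|i IH] ik; rewrite -IH ?(ltnW ik) //; apply/esym/cr; exact: ik.
Qed.

Lemma chain_exp (X : Type) (B : rsrel) (f g : rs_expM X B) k :
  rs_chain k f g <-> (forall x, rs_chain k (f x) (g x)).
Proof.
split.
- case=> c [c0 ck cr] x; exists (fun i => c i x); split.
  + by rewrite c0. + by rewrite ck.
  + by move=> i ik; apply: cr.
- move=> h.
  have [C hC] := boolp.choice h.
  exists (fun i x => C x i); split.
  + by apply: boolp.funext => x; case: (hC x).
  + by apply: boolp.funext => x; case: (hC x).
  + by move=> i ik x _ <-; case: (hC x) => _ _; apply.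
Qed.
End Aux.

Section PD.
Variable R : realType.

Lemma path_d_le (X : rsrel) (x y : X) k :
  rs_chain k x y -> path_d R x y <= k%:R%:E.
Proof. by move=> h; apply: ereal_inf_lbound; exists k. Qed.

Lemma path_d_ge (X : rsrel) (x y : X) (r : \bar R) :
  (forall k, rs_chain k x y -> r <= k%:R%:E) -> r <= path_d R x y.
Proof. by move=> h; apply: le_ereal_inf_tmp => _ [k hk <-]; apply: h. Qed.

Lemma path_d_cases (X : rsrel) (x y : X) :
  (path_d R x y = +oo /\ forall k, ~ rs_chain k x y) \/
  exists m, [/\ rs_chain m x y, path_d R x y = m%:R%:E &
                forall k, rs_chain k x y -> (m <= k)%N].
Proof.
have [[k hk]|nk] := boolp.pselect (exists k, rs_chain k x y).
- right.
  have ex : exists n, `[< rs_chain n x y >] by exists k; apply/asboolP.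
  case: (ex_minnP ex) => m /asboolP hm hmin.
  have hmin' : forall k, rs_chain k x y -> (m <= k)%N.
    by move=> k' hk'; apply: hmin; apply/asboolP.
  exists m; split => //; apply/le_anti/andP; split; first exact: path_d_le.
  apply: path_d_ge => k' hk'; rewrite lee_fin ler_nat; exact: hmin'.
- left; split; last by move=> k hk; apply: nk; exists k.
  apply/le_anti/andP; split; first exact: leey.
  by apply: path_d_ge => k hk; case: nk; exists k.
Qed.

Lemma path_d_ext (X Y : rsrel) (x y : X) (x' y' : Y) :
  (forall k, rs_chain k x y <-> rs_chain k x' y') -> path_d R x y = path_d R x' y'.
Proof.
move=> h; rewrite /path_d; congr ereal_inf; congr image.
by apply: boolp.funext => k; apply: boolp.propext; apply: h.
Qed.

Lemma path_d_ge0 (X : rsrel) (x y : X) : 0 <= path_d R x y.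
Proof. by apply: path_d_ge => k _; rewrite lee_fin ler0n. Qed.

Lemma path_d_xx (X : rsrel) (x : X) : path_d R x x = 0.
Proof.
apply/le_anti/andP; split; last exact: path_d_ge0.
by have := path_d_le (chain_refl x).
Qed.

Lemma path_d_fin (X : rsrel) (x y : X) r :
  path_d R x y <= r%:E -> exists m, rs_chain m x y /\ (m%:R <= r)%R.
Proof.
case: (path_d_cases x y) => [[-> _]|[m [hm -> _]]]; first by rewrite leye_eq.
by rewrite lee_fin => h; exists m.
Qed.

Lemma P_met (X : rsrel) : is_met (P R X).
Proof.
split => /=.
- exact: path_d_ge0.
- exact: path_d_xx.
- by move=> x y; apply: path_d_ext => k; split; apply: chain_sym.
- move=> x y z.
  case: (path_d_cases x y) => [[-> _]|[m1 [h1 -> _]]].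
    by rewrite addye ?leey // gt_eqF // (lt_le_trans _ (path_d_ge0 _ _)) ?ltNy0.
  case: (path_d_cases y z) => [[-> _]|[m2 [h2 -> _]]]; first by rewrite addey ?leey.
  by rewrite -EFinD -natrD; apply: path_d_le; apply: chain_cat h1 h2.
Qed.

Lemma P_nonexp (X Y : rsrel) (f : X -> Y) :
  rs_hom f -> nonexpansive (A := P R X) (B := P R Y) f.
Proof.
move=> hf x y /=.
case: (path_d_cases x y) => [[-> _]|[m [hm -> _]]]; first exact: leey.
by apply: path_d_le; apply: chain_map.
Qed.

Lemma path_d_prod (X Y : rsrel) (p q : rs_prod X Y) :
  path_d R p q = Order.max (path_d R p.1 q.1) (path_d R p.2 q.2).
Proof.
apply/le_anti/andP; split.
- case: (path_d_cases p.1 q.1) => [[-> _]|[m1 [h1 -> _]]].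
    by rewrite le_max leey.
  case: (path_d_cases p.2 q.2) => [[-> _]|[m2 [h2 -> _]]].
    by rewrite le_max leey orbT.
  apply: (@le_trans _ _ (maxn m1 m2)%:R%:E).
    apply: path_d_le; apply/chain_prod; split; apply: chain_pad.
    + exact: h1. + exact: leq_maxl. + exact: h2. + exact: leq_maxr.
  rewrite le_max !lee_fin !ler_nat.
  by case: (leqP m1 m2) => h; rewrite ?leqnn ?orbT.
- apply: path_d_ge => k /chain_prod [h1 h2].
  by rewrite ge_max !path_d_le.
Qed.

Lemma path_d_M (X : Type) (x y : rs_M X) :
  path_d R x y = if `[< x = y >] then 0 else +oo.
Proof.
case: boolp.asboolP => [<-|ne]; first exact: path_d_xx.
case: (path_d_cases x y) => [[-> _]//|[m [hm _ _]]].
by case: ne; apply: chain_M hm.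
Qed.

End PD.

Lemma path_d_lolli (R : realType) (X : Type) (B : rsrel)
  (f g : pm_car (met_lolli (met_inf R X) (P R B))) :
  pm_d (P R (rs_expM X B)) (proj1_sig f) (proj1_sig g)
  = pm_d (met_lolli (met_inf R X) (P R B)) f g.
Proof.
rewrite /=.
set S := (X in ereal_sup X).
have S0 : 0 <= ereal_sup S by apply: (@ereal_sup_ubound R S); left.
apply: (@le_anti _ (\bar R)); apply/andP; split.
- have hx : forall x, path_d R (proj1_sig f x) (proj1_sig g x) <= ereal_sup S.
    by move=> x; apply: (@ereal_sup_ubound R S); right; exists x.
  move: S0 hx; case: (ereal_sup S) => [r|_|//]; last by move=> _; exact: leey.
  rewrite lee_fin => r0 hx.
  apply: (@le_trans _ _ (Num.trunc r)%:R%:E); last first.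
    by rewrite lee_fin -truncn_ge_nat.
  apply: path_d_le; apply/chain_exp => x.
  have [m [hm mr]] := path_d_fin (hx x).
  apply: chain_pad hm _; by rewrite truncn_ge_nat.
- apply: path_d_ge => k /chain_exp hk; apply: ge_ereal_sup => _ [->|[x _ <-]].
    by rewrite lee_fin ler0n.
  exact: path_d_le.
Qed.

Theorem theorem6 (R : realType) :
  (* P is a functor RSRel -> Met that is the identity on morphisms *)
  (forall X : rsrel, is_met (P R X)) /\
  (forall (X Y : rsrel) (f : rs_car X -> rs_car Y),
      rs_hom f -> nonexpansive (A := P R X) (B := P R Y) f) /\
  (* (1) P is strict (symmetric) monoidal *)
  P R rs_one = met_one R /\
  (forall X Y : rsrel, P R (rs_prod X Y) = met_prod (P R X) (P R Y)) /\
  (* (2) (Id, P) is a map of adjunctions from M -| q to oo.- -| p *)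
  (forall X : Type, P R (rs_M X) = met_inf R X) /\
  (forall A : rsrel, pm_car (P R A) = rs_car A) /\
  (* (3) (P, P) is a map of adjunctions from (- x MX -| MX => -)
         to (- x oo.X -| oo.X -o -), for every set X *)
  (forall (X : Type) (A : rsrel),
      P R (rs_prod A (rs_M X)) = met_prod (P R A) (met_inf R X)) /\
  (forall (X : Type) (B : rsrel),
      (forall h : X -> rs_car B, nonexpansive (A := met_inf R X) (B := P R B) h) /\
      (forall f g : pm_car (met_lolli (met_inf R X) (P R B)),
          pm_d (P R (rs_expM X B)) (proj1_sig f) (proj1_sig g)
          = pm_d (met_lolli (met_inf R X) (P R B)) f g)) /\
  (forall (X : Type) (A : rsrel) (a : rs_car A),
      nonexpansive (A := met_inf R X) (B := met_prod (P R A) (met_inf R X))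
        (fun x => (a, x))).
Proof.
have Hprod : forall X Y : rsrel, P R (rs_prod X Y) = met_prod (P R X) (P R Y).
  move=> X Y; rewrite /P /met_prod /=; congr PMet.
  by apply: boolp.funext => p; apply: boolp.funext => q; apply: path_d_prod.
have HM : forall X : Type, P R (rs_M X) = met_inf R X.
  move=> X; rewrite /P /met_inf /=; congr PMet.
  by apply: boolp.funext => x; apply: boolp.funext => y; apply: path_d_M.
split; first exact: P_met.
split; first exact: P_nonexp.
split.
  rewrite /P /met_one /=; congr PMet.
  apply: boolp.funext => -[]; apply: boolp.funext => -[].
  exact: path_d_xx.
split; first exact: Hprod.
split; first exact: HM.
split; first by [].
split; first by move=> X A; rewrite Hprod HM.
split.
  move=> X B; split; last exact: path_d_lolli.
  move=> h x y /=; case: boolp.asboolP => [<-|_]; last exact: leey.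
  by rewrite path_d_xx.
move=> X A a x y /=; rewrite path_d_xx.
case: boolp.asboolP => [_|_]; last exact: leey.
by rewrite maxxx.
Qed.
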